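(* Let $q\ge1$ be an integer and let $X$ be a random variable such that $qX$ is integer-valued almost surely, with $\mathbb E|X|<\infty$. Then \[ \mathbb E\lfloor X\rfloor=\mathbb E X-\frac12+\frac1{2q}+\sum_{j=1}^{q-1}\frac{1}{q(1-e^{-2\pi\mathrm i j/q})}\varphi_X(2\pi j). \] If $q$ is even, then \[ \mathbb E\langle X\rangle=\mathbb E X+\frac1{2q}+\sum_{j=1}^{q-1}\frac{(-1)^j}{q(1-e^{-2\pi\mathrm i j/q})}\varphi_X(2\pi j). \] If $q$ is odd, then \[ \mathbb E\langle X\rangle=\mathbb E X+\sum_{j=1}^{q-1}\frac{(-1)^j}{q(e^{\pi\mathrm i j/q}-e^{-\pi\mathrm i j/q})}\varphi_X(2\pi j). \]
   Context: For a random variable $Y$, $\varphi_Y(t):=\mathbb E\, e^{\mathrm i tY}$ is its characteristic function. $\lfloor x\rfloor$ is $x$ rounded down to an integer, and $\langle x\rangle:=\lfloor x+\tfrac12\rfloor$ is $x$ rounded to the nearest integer, with ties broken upward. *)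

(* Defs.v *)
From HB Require Import structures.
From mathcomp Require Import all_boot all_order all_algebra.
From mathcomp Require Import all_classical all_reals all_analysis.
From mathcomp Require Import complex.
Set Implicit Arguments. Unset Strict Implicit. Unset Printing Implicit Defensive.
Import Order.TTheory GRing.Theory Num.Theory.
Local Open Scope ring_scope.

Definition cexpi (R : realType) (theta : R) : R[i] :=
  Complex (cos theta) (sin theta).

Definition charfun (d : measure_display) (T : measurableType d) (R : realType)
  (P : probability T R) (X : T -> R) (t : R) : R[i] :=
  Complex (fine ('E_P[fun w => cos (t * X w)])%E)
          (fine ('E_P[fun w => sin (t * X w)])%E).

Definition floorR (R : realType) (x : R) : R := (Num.floor x)%:~R.
Definition roundR (R : realType) (x : R) : R := (Num.floor (x + 2^-1))%:~R.

(* Main.v *)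
Require Import Defs.
From HB Require Import structures.
From mathcomp Require Import all_boot all_order all_algebra.
From mathcomp Require Import all_classical all_reals all_analysis.
From mathcomp Require Import complex.
From mathcomp Require Import ring lra measurable_realfun.
Import Order.TTheory GRing.Theory Num.Theory.
Local Open Scope ring_scope.

Section Roots.
Variables (F : fieldType) (w : F) (q : nat).
Hypotheses (q0 : (0 < q)%N) (wq : w ^+ q = 1)
  (wj : forall j, (0 < j < q)%N -> w ^+ j != 1).

Lemma w_neq0 : w != 0.
Proof. apply/negP => /eqP w0; move: wq; rewrite w0 expr0n gtn_eqF //= => /eqP; by rewrite eq_sym oner_eq0. Qed.

Lemma geom_sum m : (0 < m < q)%N -> \sum_(1 <= j < q) w ^+ (j * m) = -1.
Proof.
move=> hm.
have h0 : \sum_(0 <= j < q) w ^+ (j * m) = 0.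
  have u1 : w ^+ m - 1 != 0 by rewrite subr_eq0 wj.
  have := subrX1 (w ^+ m) q.
  have -> : (w ^+ m) ^+ q = 1 by rewrite -exprM mulnC exprM wq expr1n.
  rewrite subrr => /esym/eqP.
  rewrite mulf_eq0 (negbTE u1) /= => /eqP h.
  rewrite big_mkord; rewrite -[RHS]h; apply: eq_bigr => i _; by rewrite mulnC exprM.
move: h0; rewrite (big_ltn q0) /= mul0n expr0 => /eqP; rewrite addrC addr_eq0 => /eqP ->.
done.
Qed.

Lemma key_id (u : F) : u != 0 -> u != 1 -> (1 - u^-1)^-1 + (1 - u)^-1 = 1.
Proof.
move=> u0 u1.
have h1 : 1 - u != 0 by rewrite subr_eq0 eq_sym.
have h2 : u - 1 != 0 by rewrite subr_eq0.
have -> : 1 - u^-1 = (u - 1) / u by field.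
rewrite invfM invrK.
have -> : (1 - u) = - (u - 1) by ring.
rewrite invrN; field; done.
Qed.

Lemma S0 : 2 * \sum_(1 <= j < q) (1 - (w ^+ j)^-1)^-1 = (q.-1)%:R.
Proof.
rewrite mulr2n mulrDl mul1r.
rewrite [X in _ + X = _]big_nat_rev /=.
rewrite -big_split /=.
rewrite (eq_big_nat _ _ (F2 := fun _ => 1)).
  by rewrite big_const_nat iter_addr_0 subn1.
move=> j /andP[j1 jq].
have e : (1 + q - j.+1 = q - j)%N by rewrite add1n subSS.
rewrite e.
have wn : w ^+ j != 0 by rewrite expf_neq0 // w_neq0.
have -> : (w ^+ (q - j))^-1 = w ^+ j.
  apply: (mulfI (expf_neq0 (q - j) w_neq0)).
  rewrite divff ?expf_neq0 ?w_neq0 // -exprD subnK ?wq // ltnW //.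
apply: key_id => //; apply: wj; rewrite j1 //.
Qed.

Lemma S_formula r : (r < q)%N ->
  2 * \sum_(1 <= j < q) w ^+ (j * r) * (1 - (w ^+ j)^-1)^-1 = (q.-1)%:R - 2 * r%:R.
Proof.
elim: r => [_|r IH hr].
  rewrite mulr0 subr0 -S0; congr (_ * _); apply: eq_bigr => j _.
  by rewrite muln0 expr0 mul1r.
have -> : \sum_(1 <= j < q) w ^+ (j * r.+1) * (1 - (w ^+ j)^-1)^-1 =
   \sum_(1 <= j < q) w ^+ (j * r) * (1 - (w ^+ j)^-1)^-1 +
   \sum_(1 <= j < q) w ^+ (j * r.+1).
  rewrite -big_split /=; apply: eq_big_nat => j /andP[j1 jq].
  have wn : w ^+ j != 0 by rewrite expf_neq0 // w_neq0.
  have w1 : w ^+ j - 1 != 0 by rewrite subr_eq0 wj // j1.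
  rewrite mulnS exprD.
  have -> : 1 - (w ^+ j)^-1 = (w ^+ j - 1) / w ^+ j by field.
  rewrite invfM invrK; field; done.
rewrite mulrDr IH ?(ltnW hr) // geom_sum //.
rewrite -addn1 natrD; ring.
Qed.

End Roots.

Section Cexpi.
Local Open Scope complex_scope.
Variable R : realType.
Implicit Types a b : R.

Lemma cexpiD a b : cexpi (a + b) = cexpi a * cexpi b.
Proof. by rewrite /cexpi cosD sinD /=; congr Complex; ring. Qed.

Lemma cexpi0 : cexpi (0 : R) = 1.
Proof. by rewrite /cexpi cos0 sin0. Qed.

Lemma cexpiN a : cexpi (- a) = (cexpi a)^-1.
Proof.
have h : cexpi (- a) * cexpi a = 1 by rewrite -cexpiD addNr cexpi0.
have nz : cexpi a != 0.
  by apply/negP => /eqP e; move: h; rewrite e mulr0 => /eqP; rewrite eq_sym oner_eq0.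
by apply: (mulIf nz); rewrite h mulVf.
Qed.

Lemma cexpiMn (n : nat) a : cexpi (n%:R * a) = cexpi a ^+ n.
Proof.
elim: n => [|n IH]; first by rewrite mul0r cexpi0 expr0.
by rewrite -addn1 natrD mulrDl mul1r cexpiD IH exprD expr1.
Qed.

Lemma cexpi2pi : cexpi (2 * pi : R) = 1.
Proof. by rewrite /cexpi mulr_natl cos2pi sin2pi. Qed.

Lemma cexpi2piz (z : int) : cexpi (2 * pi * z%:~R : R) = 1.
Proof.
case: z => n.
  have -> : (Posz n)%:~R = n%:R :> R by [].
  by rewrite mulrC cexpiMn cexpi2pi expr1n.
have -> : (Negz n)%:~R = - n.+1%:R :> R by rewrite NegzE mulrNz.
by rewrite mulrN cexpiN mulrC cexpiMn cexpi2pi expr1n invr1.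
Qed.

Lemma cexpi_ne1 (q j : nat) : (0 < j < q)%N -> cexpi (2 * pi * j%:R / q%:R : R) != 1.
Proof.
move=> /andP[j0 jq].
have q0 : (0 : R) < q%:R by rewrite ltr0n (ltn_trans j0 jq).
set y := pi * j%:R / q%:R : R.
have -> : 2 * pi * j%:R / q%:R = y *+ 2 by rewrite /y mulr_natl -mulr_natl; ring.
have y0 : 0 < y by rewrite /y divr_gt0 // mulr_gt0 ?pi_gt0 // ltr0n.
have ypi : y < pi.
  rewrite /y ltr_pdivrMr // ltr_pM2l ?pi_gt0 // ltr_nat //.
have sy : 0 < sin y by apply: sin_gt0_pi; rewrite y0 ypi.
apply/negP => /eqP e.
have : cos (y *+ 2) = 1 by move: e; rewrite /cexpi => -[].
rewrite cos_mulr2n => h.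
have : sin y ^+ 2 = 0 by rewrite sin2cos2; lra.
by move/eqP; rewrite expf_eq0 /= gt_eqF.
Qed.

Lemma floor_point (q : nat) (x : R) (z : int) : (0 < q)%N -> q%:R * x = z%:~R ->
  (floorR x)%:C = (x - 2^-1 + (2 * q%:R)^-1)%:C +
   \sum_(1 <= j < q) ((q%:R)%:C * (1 - cexpi (- (2 * pi * j%:R / q%:R))))^-1
                     * cexpi (2 * pi * j%:R * x).
Proof.
move=> q0 hz.
have qR : (q%:R : R) != 0 by rewrite pnatr_eq0 -lt0n.
set m := Num.floor x.
have [r [rq xe]] : exists r : nat, (r < q)%N /\ x = m%:~R + r%:R / q%:R.
  have /andP[f1 f2] := Num.Theory.floor_itv x.
  set k := z - m * q%:Z.
  have kE : k%:~R = q%:R * (x - m%:~R) :> R.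
    by rewrite /k intrB intrM -hz -[(q%:Z)%:~R]/(q%:R : R); ring.
  have k0 : (0 <= k)%R.
    rewrite -(ler0z R) kE mulr_ge0 // ?ler0n // subr_ge0 //.
  have kq : (k < q%:Z)%R.
    rewrite -(ltr_int R) kE -[X in _ < X]mulr1 ltr_pM2l ?ltr0n //.
    by move: f2; rewrite intrD; lra.
  case: k k0 kq kE => // r _ rq kE; exists r; split; first by [].
  move: kE; rewrite -[(Posz r)%:~R]/(r%:R) => kE.
  rewrite kE; field.
  by [].
set w := cexpi (2 * pi / q%:R : R).
have wq : w ^+ q = 1.
  have e : q%:R * (2 * pi / q%:R) = 2 * pi :> R by field.
  by rewrite /w -cexpiMn e cexpi2pi.
have wpow j : w ^+ j = cexpi (2 * pi * j%:R / q%:R).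
  by rewrite /w -cexpiMn; congr cexpi; ring.
have wj : forall j, (0 < j < q)%N -> w ^+ j != 1.
  by move=> j hj; rewrite wpow cexpi_ne1.
have hs : forall j, (1 <= j < q)%N ->
   ((q%:R)%:C * (1 - cexpi (- (2 * pi * j%:R / q%:R))))^-1 * cexpi (2 * pi * j%:R * x)
   = ((q%:R : R)%:C)^-1 * (w ^+ (j * r) * (1 - (w ^+ j)^-1)^-1).
  move=> j hj.
  have e : 2 * pi * j%:R * x = 2 * pi * (m * j%:Z)%:~R + (j * r)%:R * (2 * pi / q%:R).
    rewrite xe intrM natrM -[(j%:Z)%:~R]/(j%:R : R); field; done.
  rewrite cexpiN -wpow e cexpiD cexpi2piz mul1r cexpiMn -/w invfM.
  by rewrite mulrAC -mulrA.
rewrite (eq_big_nat _ _ hs) -mulr_sumr.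
have S := @S_formula _ w q q0 wq wj r rq.
have two : (2 : R[i]) != 0 by rewrite pnatr_eq0.
have -> : \sum_(1 <= i < q) w ^+ (i * r) * (1 - (w ^+ i)^-1)^-1 =
    ((q.-1)%:R - 2 * r%:R) / 2.
  by rewrite -S; field.
have qC : ((q%:R : R)%:C) != 0 by rewrite rmorph_nat pnatr_eq0 -lt0n.
have -> : ((q%:R : R)%:C)^-1 * (((q.-1)%:R - 2 * r%:R) / 2) =
   ((((q.-1)%:R - 2 * r%:R) / (2 * q%:R)) : R)%:C.
  rewrite rmorphM fmorphV rmorphB !rmorphM !rmorph_nat /=.
  field; by rewrite pnatr_eq0 -lt0n.
rewrite -(rmorphD (real_complex R)) /floorR -/m; congr (_%:C).
move: xe; clear -q0 qR; case: q q0 qR => // q _ qR xe.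
rewrite xe /= -addn1 natrD; field.
by rewrite natr1 pnatr_eq0.
Qed.

Lemma cexpi_pij (j : nat) : cexpi (pi * j%:R : R) = (-1) ^+ j.
Proof.
have h : cexpi (pi : R) = -1 by rewrite /cexpi cospi sinpi; apply/eqP; rewrite eq_complex /= oppr0 !eqxx.
by rewrite mulrC cexpiMn h.
Qed.

Lemma round_even (q : nat) (x : R) (z : int) : (0 < q)%N -> ~~ odd q -> q%:R * x = z%:~R ->
  (roundR x)%:C = (x + (2 * q%:R)^-1)%:C +
   \sum_(1 <= j < q) ((-1) ^+ j * ((q%:R)%:C * (1 - cexpi (- (2 * pi * j%:R / q%:R))))^-1)
                     * cexpi (2 * pi * j%:R * x).
Proof.
move=> q0 ev hz.
have qh : q = (q./2).*2 by rewrite -{1}(odd_double_half q) (negbTE ev).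
have hz' : q%:R * (x + 2^-1) = (z + (q./2)%:Z)%:~R.
  rewrite intrD mulrDr hz; congr (_ + _).
  rewrite -[((q./2)%:Z)%:~R]/((q./2)%:R : R) {1}qh -muln2 natrM; by field.
rewrite /roundR -/(floorR _) (@floor_point q (x + 2^-1) _ q0 hz').
congr (_ + _); first by congr (_%:C); ring.
apply: eq_big_nat => j _.
have -> : 2 * pi * j%:R * (x + 2^-1) = 2 * pi * j%:R * x + pi * j%:R by field.
by rewrite cexpiD cexpi_pij; ring.
Qed.

Lemma cexpi_neq0 a : cexpi a != 0.
Proof.
apply/negP => /eqP e.
have : cexpi a * cexpi (- a) = 1 by rewrite -cexpiD subrr cexpi0.
by rewrite e mul0r => /eqP; rewrite eq_sym oner_eq0.
Qed.

Lemma round_odd (q : nat) (x : R) (z : int) : odd q -> q%:R * x = z%:~R ->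
  (roundR x)%:C = x%:C +
   \sum_(1 <= j < q) ((-1) ^+ j * ((q%:R)%:C * (cexpi (pi * j%:R / q%:R)
                                 - cexpi (- (pi * j%:R / q%:R))))^-1)
                     * cexpi (2 * pi * j%:R * x).
Proof.
move=> od hz.
set k := q./2.
have qh : q = k.*2.+1 by rewrite -{1}(odd_double_half q) od.
have q0 : (0 < q)%N by rewrite qh.
have qR : (q%:R : R) != 0 by rewrite pnatr_eq0 -lt0n.
have qRp : (0 : R) < q%:R by rewrite ltr0n.
have qRe : (q%:R : R) = 2 * k%:R + 1 by rewrite qh -muln2 -addn1 natrD natrM mulrC.
set x' := x + k%:R / q%:R.
have hz' : q%:R * x' = (z + k%:Z)%:~R.
  rewrite intrD /x' mulrDr hz; congr (_ + _).
  rewrite -[(k%:Z)%:~R]/(k%:R : R); by field.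
have fl : Num.floor (x + 2^-1) = Num.floor x'.
  apply: floor_def.
  have /andP[f1 f2] := Num.Theory.floor_itv x'.
  set m := Num.floor x' in f1 f2 *.
  have xe : x + 2^-1 = x' + (2 * q%:R)^-1.
    rewrite /x' qRe; field; by rewrite -qRe.
  apply/andP; split.
    rewrite xe (le_trans f1) // lerDl invr_ge0 mulr_ge0 // ler0n.
  have hi : (z + k%:Z < q%:Z * (m + 1))%R.
    rewrite -(ltr_int R) -hz' intrM -[(q%:Z)%:~R]/(q%:R : R) ltr_pM2l //.
  move: hi; rewrite -lezD1 -(ler_int R) intrD intrM -hz' -[(q%:Z)%:~R]/(q%:R : R) => hi.
  have hi2 : x' + q%:R^-1 <= (m + 1)%:~R.
    rewrite -(ler_pM2l qRp) mulrDr mulfV //.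
  rewrite xe (lt_le_trans _ hi2) // ltrD2l ltf_pV2 ?posrE ?mulr_gt0 //.
  by rewrite ltr_pMl // ltr1n.
rewrite /roundR fl -/(floorR _) (@floor_point q x' _ q0 hz').
congr (_ + _).
  congr (_%:C); rewrite /x' qRe; field.
  by rewrite -qRe.
apply: eq_big_nat => j _.
set a := pi * j%:R / q%:R.
have -> : 2 * pi * j%:R * x' = 2 * pi * j%:R * x + (pi * j%:R + - a).
  rewrite /x' /a qRe; field; by rewrite -qRe.
have -> : - (2 * pi * j%:R / q%:R) = - a + - a by rewrite /a; field.
rewrite !cexpiD cexpi_pij !cexpiN.
have u0 := cexpi_neq0 a.
set u := cexpi a.
have -> : ((q%:R)%:C * (1 - u^-1 * u^-1))^-1 = ((q%:R)%:C * (u - u^-1))^-1 * u.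
  have e : (q%:R)%:C * (1 - u^-1 * u^-1) = (q%:R)%:C * (u - u^-1) * u^-1 by field.
  by rewrite e invfM invrK.
set A := ((q%:R)%:C * (u - u^-1))^-1.
set E := cexpi (2 * pi * j%:R * x).
transitivity (A * E * (-1) ^+ j * (u * u^-1)); first by ring.
by rewrite divff // mulr1; ring.
Qed.

End Cexpi.

Section Integ.
Local Set Implicit Arguments.
Local Open Scope complex_scope.
Context d (T : measurableType d) (R : realType) (P : probability T R).

Notation RI f := (Rintegral P setT f).

Lemma fineE (f : T -> R) : fine ('E_P[f])%E = RI f.
Proof. by rewrite unlock. Qed.

Lemma intZ (f : T -> R) (k : R) : P.-integrable setT (EFin \o f) ->
  P.-integrable setT (EFin \o (fun w => k * f w)).
Proof.
move=> h; apply: eq_integrable (integrableZl _ k h) => // x _ /=.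
Qed.

Lemma intD (f g : T -> R) : P.-integrable setT (EFin \o f) ->
  P.-integrable setT (EFin \o g) ->
  P.-integrable setT (EFin \o (fun w => f w + g w)).
Proof.
move=> hf hg; apply: eq_integrable (integrableD _ hf hg) => // x _ /=.
Qed.

Lemma int_cst (k : R) : P.-integrable setT (EFin \o (fun _ : T => k)).
Proof. exact: finite_measure_integrable_cst. Qed.

Lemma int_bounded (f : T -> R) : measurable_fun setT f ->
  (forall w, `|f w| <= 1) -> P.-integrable setT (EFin \o f).
Proof.
move=> mf hf; apply: (le_integrable _ _ _ (int_cst 1)) => //.
  exact/measurable_EFinP.
by move=> w _ /=; rewrite lee_fin normr1.
Qed.

Lemma int_cos (Y : T -> R) (t : R) : measurable_fun setT Y ->
  P.-integrable setT (EFin \o (fun w => cos (t * Y w))).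
Proof.
move=> mY; apply: int_bounded; last by move=> w; exact: cos_max.
have mc : measurable_fun setT (@cos R) := continuous_measurable_fun (@continuous_cos R).
apply: (measurableT_comp mc).
by apply: measurableT_comp => //; exact: mulrl_measurable.
Qed.

Lemma int_sin (Y : T -> R) (t : R) : measurable_fun setT Y ->
  P.-integrable setT (EFin \o (fun w => sin (t * Y w))).
Proof.
move=> mY; apply: int_bounded; last by move=> w; exact: sin_max.
have mc : measurable_fun setT (@sin R) := continuous_measurable_fun (@continuous_sin R).
apply: (measurableT_comp mc).
by apply: measurableT_comp => //; exact: mulrl_measurable.
Qed.

Lemma sum_integ (Y : T -> R) (J : seq nat) (a b t : nat -> R) :
  measurable_fun setT Y ->
  P.-integrable setT (EFin \o (fun w => \sum_(j <- J) (a j * cos (t j * Y w) + b j * sin (t j * Y w))))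
  /\ RI (fun w => \sum_(j <- J) (a j * cos (t j * Y w) + b j * sin (t j * Y w)))
     = \sum_(j <- J) (a j * RI (fun w => cos (t j * Y w)) + b j * RI (fun w => sin (t j * Y w))).
Proof.
move=> mY; elim: J => [|j J [IHi IHe]].
  under eq_fun do rewrite big_nil.
  split; first exact: int_cst.
  by rewrite big_nil Rintegral_cst // mul0r.
under eq_fun do rewrite big_cons.
have h1 := intZ (a j) (int_cos (t j) mY).
have h2 := intZ (b j) (int_sin (t j) mY).
split; first by apply: intD => //; apply: intD.
rewrite RintegralD //; last exact: intD.
rewrite RintegralD // IHe big_cons RintegralZl // ?RintegralZl //.
  exact: int_sin.
exact: int_cos.
Qed.

Lemma ae_RI (f g : T -> R) : measurable_fun setT f -> measurable_fun setT g ->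
  {ae P, forall w, f w = g w} -> RI f = RI g.
Proof.
move=> mf mg h; rewrite /Rintegral; congr fine.
apply: ae_eq_integral => //; try exact/measurable_EFinP.
by apply: filterS h => w h _; rewrite h.
Qed.

Local Notation cRe := (@complex.Re R).
Local Notation cIm := (@complex.Im R).
Lemma ReD (x y : R[i]) : cRe (x + y) = cRe x + cRe y. Proof. by case: x; case: y. Qed.
Lemma ImD (x y : R[i]) : cIm (x + y) = cIm x + cIm y. Proof. by case: x; case: y. Qed.
Lemma ReM (x y : R[i]) : cRe (x * y) = cRe x * cRe y - cIm x * cIm y. Proof. by case: x; case: y. Qed.
Lemma ImM (x y : R[i]) : cIm (x * y) = cRe x * cIm y + cIm x * cRe y. Proof. by case: x; case: y. Qed.
Lemma ReC (x : R) : cRe (x%:C) = x. Proof. by []. Qed.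
Lemma ImC (x : R) : cIm (x%:C) = 0. Proof. by []. Qed.
Lemma ReSum (J : seq nat) (F : nat -> R[i]) : cRe (\sum_(j <- J) F j) = \sum_(j <- J) cRe (F j).
Proof. elim: J => [|j J IH]; by rewrite ?big_nil ?big_cons ?ReD ?IH. Qed.
Lemma ImSum (J : seq nat) (F : nat -> R[i]) : cIm (\sum_(j <- J) F j) = \sum_(j <- J) cIm (F j).
Proof. elim: J => [|j J IH]; by rewrite ?big_nil ?big_cons ?ImD ?IH. Qed.

Lemma integ_key (Y G : T -> R) (k : R) (q : nat) (c : nat -> R[i]) :
  measurable_fun setT Y -> measurable_fun setT G -> P.-integrable setT (EFin \o Y) ->
  {ae P, forall w, (G w)%:C = (Y w + k)%:C + \sum_(1 <= j < q) c j * cexpi (2 * pi * j%:R * Y w)} ->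
  (fine ('E_P[G])%E)%:C = (fine ('E_P[Y])%E + k)%:C
     + \sum_(1 <= j < q) c j * charfun P Y (2 * pi * j%:R).
Proof.
move=> mY mG iY h.
set J := index_iota 1 q.
set t := fun j : nat => 2 * pi * j%:R : R.
have [iS1 eS1] := sum_integ J (fun j => cRe (c j)) (fun j => - cIm (c j)) t mY.
have [iS2 eS2] := sum_integ J (fun j => cIm (c j)) (fun j => cRe (c j)) t mY.
have hRe : {ae P, forall w, G w = (Y w + k) +
   \sum_(j <- J) (cRe (c j) * cos (t j * Y w) + - cIm (c j) * sin (t j * Y w))}.
  apply: filterS h => w /(congr1 (@complex.Re R)); rewrite ReD ReC ReSum => ->.
  congr (_ + _); apply: eq_bigr => j _; rewrite ReM /cexpi /=; ring.
have hIm : {ae P, forall w, (fun _ => 0) w =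
   \sum_(j <- J) (cIm (c j) * cos (t j * Y w) + cRe (c j) * sin (t j * Y w))}.
  apply: filterS h => w /(congr1 (@complex.Im R)); rewrite ImD ImC ImSum add0r => e.
  transitivity (\sum_(j <- J) complex.Im (c j * cexpi (t j * Y w))); first exact: e.
  apply: eq_bigr => j _; rewrite ImM /cexpi /=; ring.
have iYk : P.-integrable setT (EFin \o (fun w => Y w + k)) by apply: intD => //; exact: int_cst.
have E1 : fine ('E_P[G])%E = fine ('E_P[Y])%E + k +
   \sum_(j <- J) (cRe (c j) * RI (fun w => cos (t j * Y w)) + - cIm (c j) * RI (fun w => sin (t j * Y w))).
  rewrite !fineE (ae_RI mG _ hRe); last first.
    by apply/measurable_EFinP; apply: (measurable_int P); apply: intD.
  rewrite RintegralD // RintegralD //; last exact: int_cst.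
  have Rk : RI (fun _ : T => k) = k by rewrite -fineE (expectation_cst P k).
  by rewrite eS1 Rk.
have E2 : 0 = \sum_(j <- J) (cIm (c j) * RI (fun w => cos (t j * Y w)) + cRe (c j) * RI (fun w => sin (t j * Y w))).
  rewrite -eS2 -(ae_RI _ _ hIm).
  - by rewrite Rintegral_cst // mul0r.
  - exact: measurable_cst.
  - by apply/measurable_EFinP; apply: (measurable_int P).
apply/eqP; rewrite eq_complex; apply/andP; split; apply/eqP.
  rewrite ReD ReC ReC ReSum E1; congr (_ + _); apply: eq_bigr => j _.
  by rewrite ReM /charfun /= !fineE; ring.
rewrite ImD ImC ImC ImSum add0r; apply: (etrans E2); apply: eq_bigr => j _.
by rewrite ImM /charfun /= !fineE; ring.
Qed.

End Integ.

Theorem theorem3 (d : measure_display) (T : measurableType d) (R : realType)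
  (P : probability T R) (X : {RV P >-> R}) (q : nat) :
  (1 <= q)%N ->
  {ae P, forall w, exists z : int, q%:R * X w = z%:~R} ->
  P.-integrable setT (EFin \o X) ->
  ((fine 'E_P[fun w => floorR (X w)])%E)%:C%C =
    ((fine 'E_P[X])%E - 2^-1 + (2 * q%:R)^-1)%:C%C
    + \sum_(1 <= j < q)
        ((q%:R)%:C%C * (1 - cexpi (- (2 * pi * j%:R / q%:R))))^-1
        * charfun P X (2 * pi * j%:R)
  /\
  (~~ odd q ->
   ((fine 'E_P[fun w => roundR (X w)])%E)%:C%C =
    ((fine 'E_P[X])%E + (2 * q%:R)^-1)%:C%C
    + \sum_(1 <= j < q)
        ((-1) ^+ j * ((q%:R)%:C%C * (1 - cexpi (- (2 * pi * j%:R / q%:R))))^-1)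
        * charfun P X (2 * pi * j%:R))
  /\
  (odd q ->
   ((fine 'E_P[fun w => roundR (X w)])%E)%:C%C =
    ((fine 'E_P[X])%E)%:C%C
    + \sum_(1 <= j < q)
        ((-1) ^+ j * ((q%:R)%:C%C * (cexpi (pi * j%:R / q%:R)
                                 - cexpi (- (pi * j%:R / q%:R))))^-1)
        * charfun P X (2 * pi * j%:R)).
Proof.
Proof.
move=> q1 hae iX.
have mX : measurable_fun setT X by apply/measurable_EFinP; exact: (measurable_int P iX).
have mfl : measurable_fun setT (fun w => floorR (X w)).
  apply: (measurableT_comp (f := @floorR R)) => //.
  apply: nondecreasing_measurable => // x y xy.
  by rewrite /floorR ler_int le_floor.
have mrd : measurable_fun setT (fun w => roundR (X w)).
  apply: (measurableT_comp (f := @roundR R)) => //.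
  apply: nondecreasing_measurable => // x y xy.
  by rewrite /roundR ler_int le_floor // lerD2r.
split.
  rewrite -addrA.
  apply: (@integ_key _ _ _ P X (fun w => floorR (X w)) _ q
    (fun j => ((q%:R)%:C%C * (1 - cexpi (- (2 * pi * j%:R / q%:R))))^-1) mX mfl iX).
  apply: filterS hae => w [z hz].
  by rewrite (@floor_point R q (X w) z q1 hz) addrA.
split.
  move=> ev; apply: (@integ_key _ _ _ P X (fun w => roundR (X w)) _ q
    (fun j => (-1) ^+ j * ((q%:R)%:C%C * (1 - cexpi (- (2 * pi * j%:R / q%:R))))^-1) mX mrd iX).
  apply: filterS hae => w [z hz].
  by rewrite (@round_even R q (X w) z q1 ev hz).
move=> od.
rewrite -[X in (X%:C)%C + _](addr0 (fine 'E_P[X])%E).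
apply: (@integ_key _ _ _ P X (fun w => roundR (X w)) _ q
    (fun j => (-1) ^+ j * ((q%:R)%:C%C * (cexpi (pi * j%:R / q%:R)
                                 - cexpi (- (pi * j%:R / q%:R))))^-1) mX mrd iX).
apply: filterS hae => w [z hz].
by rewrite addr0 (@round_odd R q (X w) z od hz).
Qed.
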